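(* In an instance of the Profile Matching Problem (defined in the context), if the distances $d(x,y)$ of a given participant $x$ to all members $y$ of the opposite sex are pairwise distinct, then $x$ has a unique stable partner.
   Context: Profile Matching Problem: a set $\mathcal{M}$ of $n$ men and a set $\mathcal{W}$ of $n$ women; each participant $x$ has a profile $\mathbf{a}(x)\in Q_k=\{0,1\}^k$. The distance $d$ on $Q_k$ is either the Hamming distance $d_h(\mathbf{a},\mathbf{a}')=\sum_{i=1}^k\mathbf{1}(a_i\ne a_i')$ or the Weighted Hamming distance $d_w(\mathbf{a},\mathbf{a}')=\sum_{i=1}^k2^{-i}\mathbf{1}(a_i\ne a_i')$; $d(x,y)=d(\mathbf{a}(x),\mathbf{a}(y))$. Each participant $x$ has a tie-breaking list $T_x$ (a strict order on the opposite sex); the strict preference list of $x$ ranks the opposite sex in increasing order of $d(x,\cdot)$, ties broken by $T_x$. Stable matchings are in the sense of Gale and Shapley; $y$ is a stable partner of $x$ if they are matched in some stable matching. *)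

(* Defs.v *)
From mathcomp Require Import all_boot all_order all_algebra all_fingroup.
Set Implicit Arguments. Unset Strict Implicit. Unset Printing Implicit Defensive.
Import Order.TTheory GRing.Theory Num.Theory.
Local Open Scope ring_scope.

(* Profiles: elements of Q_k = {0,1}^k, coordinates indexed 0..k-1
   (coordinate i here is coordinate i+1 of the paper). *)
Definition profile (k : nat) := {ffun 'I_k -> bool}.

Inductive dist_kind := Hamming | WeightedHamming.

(* d_h(a,a') = sum_i 1(a_i <> a'_i);  d_w(a,a') = sum_i 2^{-i} 1(a_i <> a'_i)
   (paper index i = our index i+1, hence the weight 2^{-(i+1)}). *)
Definition dist (dk : dist_kind) (k : nat) (a a' : profile k) : rat :=
  match dk with
  | Hamming => \sum_(i < k | a i != a' i) 1
  | WeightedHamming => \sum_(i < k | a i != a' i) (2%:R ^- (i.+1))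
  end.

(* Strict preference of a participant: ranks the opposite sex by increasing
   distance, ties broken by the tie-breaking list T (a strict order given as a
   ranking permutation: T y < T y' means y comes before y' in T).
   [prefers dx T y y'] : the participant strictly prefers y to y', where
   dx y is the distance from the participant to y. *)
Definition prefers (n : nat) (dx : 'I_n -> rat) (T : {perm 'I_n}) (y y' : 'I_n) : bool :=
  (dx y < dx y') || ((dx y == dx y') && (T y < T y')%N).

Definition dMW (dk : dist_kind) (n k : nat) (am aw : 'I_n -> profile k)
  (m w : 'I_n) : rat := dist dk (am m) (aw w).

Definition stable (dk : dist_kind) (n k : nat) (am aw : 'I_n -> profile k)
  (Tm Tw : 'I_n -> {perm 'I_n}) (mu : {perm 'I_n}) : Prop :=
  forall m w : 'I_n,
    ~~ (prefers (fun w' => dMW dk am aw m w') (Tm m) w (mu m)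
        && prefers (fun m' => dMW dk am aw m' w) (Tw w) m ((mu^-1)%g w)).

Definition stable_partner (dk : dist_kind) (n k : nat) (am aw : 'I_n -> profile k)
  (Tm Tw : 'I_n -> {perm 'I_n}) (m w : 'I_n) : Prop :=
  exists mu : {perm 'I_n}, stable dk am aw Tm Tw mu /\ mu m = w.

(* Main.v *)
Require Import Defs.
From mathcomp Require Import all_boot all_order all_algebra all_fingroup.
Set Implicit Arguments. Unset Strict Implicit. Unset Printing Implicit Defensive.
Import Order.TTheory GRing.Theory Num.Theory.
Local Open Scope ring_scope.

Lemma prefers_irr n (dx : 'I_n -> rat) T (y : 'I_n) : ~~ prefers dx T y y.
Proof. by rewrite /prefers ltxx eqxx ltnn. Qed.

Lemma prefers_trans n (dx : 'I_n -> rat) T (x y z : 'I_n) :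
  prefers dx T x y -> prefers dx T y z -> prefers dx T x z.
Proof.
rewrite /prefers => /orP[h1|/andP[/eqP e1 h1]] /orP[h2|/andP[/eqP e2 h2]]; apply/orP.
- by left; exact: lt_trans h1 h2.
- by left; rewrite -e2.
- by left; rewrite e1.
- by right; rewrite e1 e2 eqxx /=; exact: ltn_trans h1 h2.
Qed.

Lemma prefers_total n (dx : 'I_n -> rat) T (y y' : 'I_n) :
  y != y' -> prefers dx T y y' || prefers dx T y' y.
Proof.
move=> ne; rewrite /prefers.
have : T y != T y' by rewrite (inj_eq perm_inj).
rewrite neq_ltn.
by case: (ltgtP (dx y) (dx y')).
Qed.

Lemma prefers_le n (dx : 'I_n -> rat) T (y y' : 'I_n) :
  prefers dx T y y' -> dx y <= dx y'.
Proof. by case/orP=> [/ltW|/andP[/eqP-> _]]. Qed.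

Definition stab n (D : 'I_n -> 'I_n -> rat) (Tm Tw : 'I_n -> {perm 'I_n})
  (mu : {perm 'I_n}) : Prop :=
  forall m w, ~~ (prefers (D m) (Tm m) w (mu m)
                  && prefers (fun m' => D m' w) (Tw w) m ((mu^-1)%g w)).

Lemma stab_swap n (D : 'I_n -> 'I_n -> rat) Tm Tw mu :
  stab D Tm Tw mu -> stab (fun w m => D m w) Tw Tm (mu^-1)%g.
Proof. by move=> s w m; rewrite invgK andbC; exact: s. Qed.

Lemma core n (D : 'I_n -> 'I_n -> rat) Tm Tw (mu1 mu2 : {perm 'I_n}) x :
  stab D Tm Tw mu1 -> stab D Tm Tw mu2 ->
  prefers (D x) (Tm x) (mu1 x) (mu2 x) -> D x (mu1 x) = D x (mu2 x).
Proof.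
move=> s1 s2 px.
pose A := [set m | prefers (D m) (Tm m) (mu1 m) (mu2 m)].
have phiA : forall m, m \in A ->
   prefers (fun m' => D m' (mu1 m)) (Tw (mu1 m)) ((mu2^-1)%g (mu1 m)) m
   /\ (mu2^-1)%g (mu1 m) \in A.
  move=> m; rewrite inE => pm.
  have ne : mu1 m != mu2 m by apply: contraTneq pm => ->; exact: prefers_irr.
  have nphi : (mu2^-1)%g (mu1 m) != m.
    by apply: contra ne => /eqP e; rewrite -{2}e permKV.
  have pw : prefers (fun m' => D m' (mu1 m)) (Tw (mu1 m)) ((mu2^-1)%g (mu1 m)) m.
    have := s2 m (mu1 m); rewrite pm /= => h.
    have := prefers_total (fun m' => D m' (mu1 m)) (Tw (mu1 m)) nphi.
    by rewrite (negbTE h) orbF.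
  split=> //; rewrite inE.
  set m' := (mu2^-1)%g (mu1 m) in nphi pw *.
  have e2 : mu2 m' = mu1 m by rewrite /m' permKV.
  have := s1 m' (mu1 m); rewrite permK pw andbT -e2 => h.
  have ne' : mu1 m' != mu2 m'.
    by rewrite e2; apply: contra nphi => /eqP /perm_inj ->.
  have := prefers_total (D m') (Tm m') ne'.
  by rewrite (negbTE h) orbF.
have phiinj : injective (fun m => (mu2^-1)%g (mu1 m)).
  by move=> a b /perm_inj /perm_inj.
have imA : [set (mu2^-1)%g (mu1 m) | m in A] = A.
  apply/eqP; rewrite eqEcard card_imset // leqnn andbT.
  by apply/subsetP => y /imsetP [m mA ->]; exact: (phiA m mA).2.
have h1 : forall m, m \in A -> D m (mu1 m) <= D m (mu2 m).
  by move=> m; rewrite inE => /prefers_le.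
have h2 : forall m, m \in A ->
    D ((mu2^-1)%g (mu1 m)) (mu2 ((mu2^-1)%g (mu1 m))) <= D m (mu1 m).
  by move=> m mA; rewrite permKV; exact: prefers_le (phiA m mA).1.
have re : \sum_(m in A) D m (mu2 m)
        = \sum_(m in A) D ((mu2^-1)%g (mu1 m)) (mu2 ((mu2^-1)%g (mu1 m))).
  rewrite (reindex_inj phiinj) /=; apply: eq_bigl => m.
  apply/idP/idP => [|mA]; last exact: (phiA m mA).2.
  by rewrite -{1}imA => /imsetP [m0 m0A /phiinj ->].
have S1 : \sum_(m in A) D m (mu1 m) <= \sum_(m in A) D m (mu2 m) by apply: ler_sum.
have S2 : \sum_(m in A) D m (mu2 m) <= \sum_(m in A) D m (mu1 m).
  by rewrite re; apply: ler_sum.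
have E : \sum_(m in A) (D m (mu2 m) - D m (mu1 m)) = 0.
  by rewrite sumrB; apply/eqP; rewrite subr_eq0 eq_le S1 S2.
have xA : x \in A by rewrite inE.
have P0 : forall m, m \in A -> 0 <= D m (mu2 m) - D m (mu1 m).
  by move=> m mA; rewrite subr_ge0; exact: h1.
have /eqP := psumr_eq0P P0 E xA.
by rewrite subr_eq0 => /eqP.
Qed.

Lemma uniq_man n (D : 'I_n -> 'I_n -> rat) Tm Tw (mu1 mu2 : {perm 'I_n}) m :
  stab D Tm Tw mu1 -> stab D Tm Tw mu2 -> injective (D m) -> mu1 m = mu2 m.
Proof.
move=> s1 s2 inj; case: (eqVneq (mu1 m) (mu2 m)) => // ne.
case/orP: (prefers_total (D m) (Tm m) ne) => p.
- by move: ne; rewrite (inj _ _ (core s1 s2 p)) eqxx.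
- by apply: inj; symmetry; exact: core s2 s1 p.
Qed.

Lemma best (T : finType) (r : rel T) (B : {set T}) :
  irreflexive r -> transitive r -> B != set0 ->
  exists2 x, x \in B & forall y, y \in B -> ~~ r y x.
Proof.
move=> irr tr.
have : (#|B| <= #|B|)%N by [].
move: {2}#|B| => k; elim: k B => [|k IH] B.
  by rewrite leqn0 cards_eq0 => /eqP ->; rewrite eqxx.
move=> Bk /set0Pn [x xB].
case: (boolP [exists y in B, r y x]); last first.
  move/existsPn => h; exists x => // y yB.
  by have := h y; rewrite yB.
case/existsP => y /andP [yB ryx].
pose B' := [set z in B | r z x].
have B'k : (#|B'| <= k)%N.
  have : B' \proper B.
    rewrite properE; apply/andP; split.
      by apply/subsetP => z; rewrite inE => /andP [].
    by apply/subsetP => /(_ x xB); rewrite inE xB irr.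
  by move/proper_card => lt; rewrite -ltnS (leq_trans lt Bk).
have B'n : B' != set0 by apply/set0Pn; exists y; rewrite inE yB.
have [z zB' hz] := IH B' B'k B'n.
move: zB'; rewrite inE => /andP [zB rzx].
exists z => // y' y'B; apply/negP => ry'z.
by have := hz y'; rewrite inE y'B (tr _ _ _ ry'z rzx) ry'z => /(_ isT).
Qed.

Definition bm n (D : 'I_n -> 'I_n -> rat) (Tm : 'I_n -> {perm 'I_n})
  (X : {set 'I_n * 'I_n}) (e : 'I_n * 'I_n) : bool :=
  [exists e' in X, (e'.1 == e.1) && prefers (D e.1) (Tm e.1) e'.2 e.2].
Definition bw n (D : 'I_n -> 'I_n -> rat) (Tw : 'I_n -> {perm 'I_n})
  (Y : {set 'I_n * 'I_n}) (e : 'I_n * 'I_n) : bool :=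
  [exists e' in Y, (e'.2 == e.2) && prefers (fun m => D m e.2) (Tw e.2) e'.1 e.1].
Definition RM n D Tm (X : {set 'I_n * 'I_n}) := [set e in X | bm D Tm X e].
Definition RW n D Tw (Y : {set 'I_n * 'I_n}) := [set e in Y | bw D Tw Y e].
Definition FF n D Tm Tw (X : {set 'I_n * 'I_n}) := ~: RW D Tw (~: RM D Tm X).

Lemma FF_mono n (D : 'I_n -> 'I_n -> rat) Tm Tw : {homo FF D Tm Tw : X Y / X \subset Y}.
Proof.
have mRM : forall X Y : {set 'I_n * 'I_n}, X \subset Y -> RM D Tm X \subset RM D Tm Y.
  move=> X Y /subsetP XY; apply/subsetP => e; rewrite !inE => /andP [eX].
  case/existsP => e' /andP [e'X h]; rewrite XY //=.
  by apply/existsP; exists e'; rewrite XY.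
have mRW : forall X Y : {set 'I_n * 'I_n}, X \subset Y -> RW D Tw X \subset RW D Tw Y.
  move=> X Y /subsetP XY; apply/subsetP => e; rewrite !inE => /andP [eX].
  case/existsP => e' /andP [e'X h]; rewrite XY //=.
  by apply/existsP; exists e'; rewrite XY.
by move=> X Y XY; rewrite /FF setCS; apply: mRW; rewrite setCS; apply: mRM.
Qed.

Lemma exists_stable n (D : 'I_n -> 'I_n -> rat) Tm Tw : exists mu, stab D Tm Tw mu.
Proof.
pose X := fixset (FF D Tm Tw).
have FX : FF D Tm Tw X = X := fixsetK (FF_mono D Tm Tw).
pose Y := ~: RM D Tm X.
pose S := X :&: Y.
have inS : forall e, (e \in S) = (e \in X) && ~~ bm D Tm X e.
  by move=> e; rewrite !inE; case: (e \in X).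
have notX : forall e, (e \notin X) = (e \in Y) && bw D Tw Y e.
  by move=> e; rewrite -{1}FX !inE negbK.
have inS2 : forall e, e \in S -> ~~ bw D Tw Y e.
  move=> e; rewrite inE => /andP [eX eY]; apply: contraL eX => h.
  by rewrite notX eY h.
have manU : forall m w w', (m, w) \in S -> (m, w') \in S -> w = w'.
  move=> m w w'; rewrite !inS => /andP [wX nw] /andP [w'X nw'].
  case: (eqVneq w w') => // ne.
  case/orP: (prefers_total (D m) (Tm m) ne) => p.
    by move: nw'; rewrite /bm; move/existsPn => /(_ (m, w)); rewrite wX eqxx p.
  by move: nw; rewrite /bm; move/existsPn => /(_ (m, w')); rewrite w'X eqxx p.
have womU : forall m m' w, (m, w) \in S -> (m', w) \in S -> m = m'.
  move=> m m' w mS m'S.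
  have nm := inS2 _ mS; have nm' := inS2 _ m'S.
  have mY : (m, w) \in Y by move: mS; rewrite inE => /andP [].
  have m'Y : (m', w) \in Y by move: m'S; rewrite inE => /andP [].
  case: (eqVneq m m') => // ne.
  case/orP: (prefers_total (fun m0 => D m0 w) (Tw w) ne) => p.
    by move: nm'; rewrite /bw; move/existsPn => /(_ (m, w)); rewrite mY eqxx p.
  by move: nm; rewrite /bw; move/existsPn => /(_ (m', w)); rewrite m'Y eqxx p.
have exS : forall m, exists w, (m, w) \in S.
  move=> m; case: (boolP [exists w, (m, w) \in S]) => [/existsP //|/existsPn none].
  have allw : forall w, exists m', (m', w) \in S.
    move=> w.
    have mwX : (m, w) \notin X.
      apply/negP => mX.
      have ne0 : [set w' | (m, w') \in X] != set0.
        by apply/set0Pn; exists w; rewrite inE.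
      have [w0 w0B hw0] := @best _ (fun a b => prefers (D m) (Tm m) a b)
          [set w' | (m, w') \in X] (fun y => negbTE (prefers_irr _ _ y))
          (fun b a c => @prefers_trans _ _ _ a b c) ne0.
      have := none w0; rewrite inS.
      move: w0B; rewrite inE => ->; rewrite /= negbK.
      case/existsP => [[m1 w1]] /= /andP [w1X /andP [/eqP e p]].
      have := hw0 w1; rewrite inE -e w1X => /(_ isT).
      by rewrite e p.
    move: mwX; rewrite notX => /andP [mY].
    case/existsP => e' /andP [e'Y /andP [/eqP e2 _]].
    have ne0 : [set m' | (m', w) \in Y] != set0.
      apply/set0Pn; exists e'.1; rewrite inE.
      by move: e'Y e2; case: e' => a b /= H E; rewrite -E.
    have [m0 m0B hm0] := @best _ (fun a b => prefers (fun m1 => D m1 w) (Tw w) a b)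
          [set m' | (m', w) \in Y] (fun y => negbTE (prefers_irr _ _ y))
          (fun b a c => @prefers_trans _ _ _ a b c) ne0.
    exists m0; move: m0B; rewrite inE => m0Y.
    rewrite inE m0Y andbT.
    rewrite -[_ \in X]negbK notX m0Y /=; apply/negP.
    case/existsP => [[m1 w1]] /= /andP [m1Y /andP [/eqP e p]].
    have := hm0 m1; rewrite inE -e m1Y => /(_ isT).
    by rewrite e p.
  exfalso.
  have c1 : (n <= #|S|)%N.
    have : [set e.2 | e in S] = setT.
      apply/eqP; rewrite eqEsubset subsetT /=; apply/subsetP => w _.
      by have [m' m'S] := allw w; apply/imsetP; exists (m', w).
    move=> E; have := leq_imset_card (fun e : 'I_n * 'I_n => e.2) S.
    by rewrite E cardsT card_ord.
  have c2 : (#|S| <= n.-1)%N.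
    have inj1 : {in S &, injective (fun e : 'I_n * 'I_n => e.1)}.
      move=> [a b] [a' b'] aS a'S /= ea; move: aS; rewrite ea => aS.
      by rewrite (manU _ _ _ aS a'S).
    rewrite -(card_in_imset inj1).
    have : [set e.1 | e in S] \subset [set~ m].
      apply/subsetP => a /imsetP [[a1 b1] abS ->]; rewrite !inE /=.
      by apply: contraTneq abS => ->; exact: none.
    move/subset_leq_card; rewrite cardsC1 card_ord //.
  have : (0 < n)%N by move: (ltn_ord m); exact: leq_ltn_trans.
  move=> n0; have := leq_trans c1 c2.
  by rewrite -(prednK n0) /= ltnn.
pose f := fun m : 'I_n => if [pick w | (m, w) \in S] is Some w then w else m.
have fS : forall m, (m, f m) \in S.
  move=> m; rewrite /f; case: pickP => [w //|none].
  by have [w wS] := exS m; move: (none w); rewrite wS.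
have finj : injective f.
  by move=> a b e; apply: (womU _ _ (f a) (fS a)); rewrite e; exact: fS.
pose mu := perm finj.
have muS : forall m, (m, mu m) \in S by move=> m; rewrite permE; exact: fS.
have muS' : forall w, ((mu^-1)%g w, w) \in S.
  by move=> w; have := muS ((mu^-1)%g w); rewrite permKV.
exists mu => m w; apply/negP => /andP [p1 p2].
case: (boolP ((m, w) \in X)) => hX.
  have := muS m; rewrite inS => /andP [_ /negP]; apply.
  by apply/existsP; exists (m, w); rewrite hX eqxx.
move: hX; rewrite notX => /andP [mwY _].
have := inS2 _ (muS' w) => /negP; apply.
by apply/existsP; exists (m, w); rewrite mwY eqxx.
Qed.

Theorem lemmaA4 (dk : dist_kind) (n k : nat) (am aw : 'I_n -> profile k)
  (Tm Tw : 'I_n -> {perm 'I_n}) :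
  (forall m : 'I_n,
     injective (fun w : 'I_n => dMW dk am aw m w) ->
     exists! w : 'I_n, stable_partner dk am aw Tm Tw m w) /\
  (forall w : 'I_n,
     injective (fun m : 'I_n => dMW dk am aw m w) ->
     exists! m : 'I_n, stable_partner dk am aw Tm Tw m w).
Proof.
have [mu st] := exists_stable (dMW dk am aw) Tm Tw.
split.
- move=> m inj; exists (mu m); split; first by exists mu.
  move=> w' [mu' [st' <-]].
  exact: (uniq_man st st' inj).
- move=> w inj; exists ((mu^-1)%g w); split.
    by exists mu; split => //; rewrite permKV.
  move=> m' [mu' [st' e]].
  have := uniq_man (stab_swap st) (stab_swap st') inj.
  by move=> ->; rewrite -e permK.
Qed.
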